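(* Let $\theta_n>0$ and let $L_n\ge1$ be an integer. Let $X$ be a real tensor (the output of the first MatMul layer of a network on a given input, which is computed identically in the ANN and in the PASC SNN). Let $z^l=\widehat h(X)$ be the output of the first QCFS activation layer of the ANN, and let $s^l=(s^l(1),\dots,s^l(L_n))$ be the output of the PASC input-layer procedure (described in the context) on $X$. Then (a) $\sum_{i=1}^{L_n}s^l(i)=z^l$, and (b) every entry of $s^l$ lies in the set $\{0,\theta_n/L_n\}$.
   Context: The QCFS activation with quantization step $L_n$ and threshold $\theta_n$ is $\widehat h(X)=\theta_n\,\mathrm{clip}\!\left(\frac{1}{L_n}\left\lfloor \frac{X L_n}{\theta_n}+\frac12\right\rfloor,0,1\right)$ (elementwise), where $\mathrm{clip}(y,0,1)=\min(\max(y,0),1)$. $H$ denotes the Heaviside step function, $H(y)=1$ if $y\ge0$ and $0$ otherwise. PASC input-layer procedure (elementwise): set $\theta^*=\theta_n/L_n$ and initial membrane potential $\mathrm{mem}(0)=\widehat h(X)$; for $t=1,\dots,L_n$ set $s^l(t)=H(\mathrm{mem}(t-1)-\theta^* )\cdot\theta^*$ and $\mathrm{mem}(t)=\mathrm{mem}(t-1)-s^l(t)$; the output is the stack $s^l$ of $s^l(1),\dots,s^l(L_n)$. *)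

(* Defs.v *)
From mathcomp Require Import all_boot all_order all_algebra.
From mathcomp Require Import reals.
Set Implicit Arguments. Unset Strict Implicit. Unset Printing Implicit Defensive.
Import Order.TTheory GRing.Theory Num.Theory.
Local Open Scope ring_scope.

Section Defs.
Variable R : realType.

Definition clip01 (y : R) : R := Num.min (Num.max y 0) 1.

Definition heaviside (y : R) : R := if 0 <= y then 1 else 0.

Definition qcfs (theta : R) (L : nat) (x : R) : R :=
  theta * clip01 ((L%:R)^-1 * (Num.floor (x * L%:R / theta + 2^-1))%:~R).

(* PASC input layer, scalar version.  pasc_mem t = mem(t); pasc_spike t = s(t) for t >= 1. *)
Fixpoint pasc_mem (theta : R) (L : nat) (x : R) (t : nat) : R :=
  match t with
  | 0 => qcfs theta L x
  | t'.+1 =>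
      let m := pasc_mem theta L x t' in
      m - heaviside (m - theta / L%:R) * (theta / L%:R)
  end.

Definition pasc_spike (theta : R) (L : nat) (x : R) (t : nat) : R :=
  let m := pasc_mem theta L x t.-1 in
  heaviside (m - theta / L%:R) * (theta / L%:R).

Definition qcfs_tensor (I : Type) theta L (X : I -> R) : I -> R :=
  fun i => qcfs theta L (X i).

(* Output stack: for t : 'I_L, entry (t, i) is s(t+1) at index i. *)
Definition pasc_input_layer (I : Type) theta L (X : I -> R) : 'I_L -> I -> R :=
  fun t i => pasc_spike theta L (X i) t.+1.
End Defs.
Arguments pasc_input_layer {R I} theta L X _ _.
Arguments qcfs_tensor {R I} theta L X _.

(* Main.v *)
Require Import Defs.
From mathcomp Require Import all_boot all_order all_algebra.
From mathcomp Require Import reals.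
From mathcomp Require Import ring lra zify.
Import Order.TTheory GRing.Theory Num.Theory.
Local Open Scope ring_scope.

Lemma clip_int (R : realType) (L : nat) (f : int) : (1 <= L)%N ->
  exists k : nat, (k <= L)%N /\
    clip01 ((L%:R : R)^-1 * f%:~R) = k%:R / L%:R.
Proof.
move=> hL.
have L0 : (0 : R) < L%:R by rewrite ltr0n.
case: (lerP f 0) => hf.
  exists 0%N; split => //; rewrite /clip01 mul0r.
  have : (L%:R : R)^-1 * f%:~R <= 0.
    apply: mulr_ge0_le0; first by rewrite invr_ge0 ler0n.
    by rewrite -(ler_int R) in hf.
  move=> h; rewrite (max_r h) (min_l (@ler01 R)) //.
case: (lerP (L%:Z) f) => hf2.
  exists L; split => //; rewrite /clip01 divff ?gt_eqF //.
  have h : 1 <= (L%:R : R)^-1 * f%:~R.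
    rewrite mulrC ler_pdivlMr // mul1r.
    have -> : (L%:R : R) = (L%:Z)%:~R by rewrite pmulrn.
    by rewrite ler_int.
  rewrite (max_l (le_trans (@ler01 R) h)) (min_r h) //.
case: f hf hf2 => [n|n] // hf hf2.
exists n; split; first by lia.
have y0 : 0 <= (L%:R : R)^-1 * (Posz n)%:~R.
  by rewrite mulr_ge0 // ?invr_ge0 ?ler0n.
have y1 : (L%:R : R)^-1 * (Posz n)%:~R <= 1.
  rewrite mulrC ler_pdivrMr // mul1r pmulrn ler_nat; lia.
by rewrite /clip01 (max_l y0) (min_l y1) pmulrn mulrC.
Qed.

Lemma mem_formula (R : realType) (theta : R) (L : nat) (x : R) (k : nat) :
  0 < theta / L%:R ->
  qcfs theta L x = k%:R * (theta / L%:R) ->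
  forall t, pasc_mem theta L x t = (k - t)%N%:R * (theta / L%:R).
Proof.
move=> d0 hq; elim=> [|t IH] /=; first by rewrite subn0.
rewrite IH /heaviside.
case: (ltnP t k) => htk.
  have -> : 0 <= (k - t)%N%:R * (theta / L%:R) - theta / L%:R.
    rewrite subr_ge0 ler_pMl // (ler_nat R 1); lia.
  have -> : (k - t)%N = (k - t.+1).+1 by lia.
  rewrite /= mul1r -nat1r mulrDl mul1r addrC addKr.
  done.
have -> : (k - t)%N = 0%N by lia.
have -> : (k - t.+1)%N = 0%N by lia.
rewrite mul0r; case: ifP => h; last by rewrite mul0r subr0.
exfalso; move: h; rewrite sub0r oppr_ge0 leNgt d0 //.
Qed.

Lemma sum_ind (R : realType) (d : R) (k n : nat) :
  \sum_(t < n) (if (t < k)%N then d else 0) = (minn k n)%:R * d.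
Proof.
elim: n => [|n IH]; first by rewrite big_ord0 minn0 mul0r.
rewrite big_ord_recr /= IH.
case: (ltnP n k) => h.
  have -> : minn k n.+1 = n.+1 by lia.
  have e : minn k n = n by lia.
  rewrite ?e.
  by rewrite mulrS mulrDl mul1r addrC.
have -> : minn k n.+1 = k by lia.
have e : minn k n = k by lia.
  rewrite ?e.
by rewrite addr0.
Qed.

Theorem theorem3 (R : realType) (I : Type) (theta : R) (L : nat)
    (htheta : 0 < theta) (hL : (1 <= L)%N) (X : I -> R) :
  (forall i : I,
     \sum_(t < L) pasc_input_layer theta L X t i = qcfs_tensor theta L X i) /\
  (forall (t : 'I_L) (i : I),
     pasc_input_layer theta L X t i = 0 \/
     pasc_input_layer theta L X t i = theta / L%:R).
Proof.
split; last first.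
  move=> t i; rewrite /pasc_input_layer /pasc_spike /heaviside.
  case: ifP => _; [right; by rewrite mul1r | left; by rewrite mul0r].
move=> i.
have L0 : (0 : R) < L%:R by rewrite ltr0n.
have d0 : 0 < theta / L%:R by rewrite divr_gt0.
have [k [hk hc]] := clip_int R L (Num.floor (X i * L%:R / theta + 2^-1)) hL.
have hq : qcfs theta L (X i) = k%:R * (theta / L%:R).
  by rewrite /qcfs hc mulrCA mulrA.
have hm := mem_formula _ _ _ _ _ d0 hq.
rewrite /qcfs_tensor hq.
under eq_bigr => t _ do
  rewrite /pasc_input_layer /pasc_spike /= hm /heaviside.
have e : k%:R * (theta / L%:R) = (minn k L)%:R * (theta / L%:R) by rewrite (minn_idPl hk).
rewrite e -sum_ind.
apply: eq_bigr => t _.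
case: (ltnP t k) => htk.
  have -> : 0 <= (k - t)%N%:R * (theta / L%:R) - theta / L%:R.
    rewrite subr_ge0 ler_pMl // (ler_nat R 1); lia.
  by rewrite /= mul1r.
have -> : (k - t)%N = 0%N by lia.
rewrite mul0r sub0r oppr_ge0 leNgt d0 /=.
by rewrite mul0r.
Qed.
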